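(* Let $B(x)=\frac{x}{1+x^2}$, $B_0(x)=x$ and $B_j(x)=B(B_{j-1}(x))$ for $j\ge1$ (rational functions of $x$). For every $j\ge0$, the equation $B_j(x)=-1$ has at least one root $x\in\mathbb{C}$, and this root is not a root of $B_{j'}(x)=-1$ for any $j'\neq j$. *)

(* Defs.v *)
From mathcomp Require Import all_boot all_order all_algebra.
Set Implicit Arguments. Unset Strict Implicit. Unset Printing Implicit Defensive.
Import Order.TTheory GRing.Theory Num.Theory.
Local Open Scope ring_scope.

(* Points of the Riemann sphere over C: [Some z] is the finite point z,
   [None] is the point at infinity. *)

Definition Bsph (C : numClosedFieldType) (y : option C) : option C :=
  match y with
  | None => Some 0
  | Some z => if 1 + z ^+ 2 == 0 then None else Some (z / (1 + z ^+ 2))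
  end.

Definition Bj (C : numClosedFieldType) (j : nat) (x : C) : option C :=
  iter j (@Bsph C) (Some x).

(* Main.v *)
Require Import Defs.
From mathcomp Require Import all_boot all_order all_algebra.
From mathcomp Require Import ring lra.
Import Order.TTheory GRing.Theory Num.Theory.
Local Open Scope ring_scope.

Fixpoint bq (k : nat) : rat :=
  match k with 0%N => -1 | k'.+1 => bq k' / (1 + bq k' ^+ 2) end.

Lemma bq_range k : -1 <= bq k < 0.
Proof.
elim: k => [|k /andP [h1 h2]] /=; first by [].
have d0 : 0 < 1 + bq k ^+ 2 by rewrite ltr_wpDr ?sqr_ge0.
apply/andP; split.
  rewrite ler_pdivlMr //. nra.
rewrite ltr_pdivrMr //. nra.
Qed.

Lemma bq_ne k : (0 < k)%N -> bq k <> -1.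
Proof.
case: k => // k _ /=.
have /andP [h1 h2] := bq_range k.
have d0 : 0 < 1 + bq k ^+ 2 by rewrite ltr_wpDr ?sqr_ge0.
move=> E.
have : -1 < bq k / (1 + bq k ^+ 2) by rewrite ltr_pdivlMr //; nra.
by rewrite E ltxx.
Qed.

Lemma iter_bq (C : numClosedFieldType) k :
  iter k (@Bsph C) (Some (-1)) = Some (ratr (bq k)).
Proof.
elim: k => [|k IH]; first by rewrite /= rmorphN1.
rewrite iterS IH /=.
have d0 : 0 < 1 + bq k ^+ 2 by rewrite ltr_wpDr ?sqr_ge0.
have -> : 1 + (ratr (bq k) : C) ^+ 2 = ratr (1 + bq k ^+ 2)
  by rewrite rmorphD rmorph1 rmorphXn.
rewrite fmorph_eq0 (negbTE (lt0r_neq0 d0)).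
by rewrite fmorph_div.
Qed.

Lemma iter_ne (C : numClosedFieldType) k :
  (0 < k)%N -> iter k (@Bsph C) (Some (-1)) <> Some (-1).
Proof.
move=> k0; rewrite iter_bq => -[E].
apply: (@bq_ne k k0). apply: (fmorph_inj (GRing.RMorphism.clone _ _ (@ratr C) _)).
by rewrite /= E rmorphN1.
Qed.

Lemma pre (C : numClosedFieldType) (y : C) : exists x, Bsph (Some x) = Some y.
Proof.
have [->|y0] := eqVneq y 0.
  by exists 0; rewrite /= expr0n /= addr0 oner_eq0 mul0r.
set d := sqrtC (1 - 4 * y ^+ 2).
set x := (1 + d) / (2 * y).
have n2 : (2 : C) != 0 by rewrite pnatr_eq0.
have key : y * (1 + x ^+ 2) = x.
  apply/eqP; rewrite -subr_eq0; apply/eqP.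
  have -> : y * (1 + x ^+ 2) - x = (d ^+ 2 - (1 - 4 * y ^+ 2)) / (4 * y).
    by rewrite /x; field; rewrite ?mulf_neq0 //.
  by rewrite /d sqrtCK subrr mul0r.
have nz : 1 + x ^+ 2 != 0.
  apply/negP => /eqP h.
  move: key; rewrite h mulr0 => hx.
  by move: h; rewrite -hx expr0n /= addr0 => /eqP; rewrite oner_eq0.
exists x; rewrite /= (negbTE nz); congr Some.
by rewrite -[X in X / _]key mulfK.
Qed.

Lemma surj (C : numClosedFieldType) j (w : C) : exists x, Bj j x = Some w.
Proof.
elim: j w => [|j IH] w; first by exists w.
have [x' Hx'] := IH w.
have [x Hx] := @pre C x'.
by exists x; rewrite /Bj iterSr Hx.
Qed.

Theorem proposition2p6 (C : numClosedFieldType) (j : nat) :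
  exists x : C, Bj j x = Some (-1) /\
    (forall j' : nat, j' <> j -> Bj j' x <> Some (-1)).
Proof.
have [x Hx] := surj C j (-1).
exists x; split => // j' nj.
have [lt|gt] := ltnP j j'.
  rewrite /Bj -(subnK (ltnW lt)) iterD.
  rewrite /Bj in Hx; rewrite Hx; apply: iter_ne; by rewrite subn_gt0.
have lt : (j' < j)%N by rewrite ltn_neqAle gt andbT; apply/eqP.
move=> E; move: Hx.
rewrite /Bj -(subnK (ltnW lt)) iterD.
rewrite /Bj in E; rewrite E; apply: iter_ne; by rewrite subn_gt0.
Qed.
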